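(* Let $R$ be an associative unital division ring over a field of characteristic $0$. Let $\theta_{m,n}\in R$ be invertible for $m\in\mathbb{Z}$, $n\geq1$, with the convention $\theta_{m,0}^{-1}:=0$. Put $a_{m,n}=\theta_{m+1,n}\theta_{m,n}^{-1}$, $b_{m,n}=\theta_{m-1,n+1}\theta_{m,n}^{-1}$. Define semi-infinite matrices (indices $k\geq1$) $$(L_m)_{k,k+1}=1,\quad (L_m)_{k,k}=a_{m-1,k}+b_{m,k},\quad (L_m)_{k+1,k}=a_{m-1,k+1}b_{m,k},\qquad (M_m)_{k,k}=1,\quad (M_m)_{k+1,k}=b_{m,k},$$ all other entries zero. If $L_{m-1}M_m=M_mL_m$ for all $m\in\mathbb{Z}$, then for all $m\in\mathbb{Z}$ and $n\geq1$ $$\theta_{m+2,n}=\theta_{m,n+1}+\theta_{m+1,n}\bigl(\theta_{m,n}^{-1}-\theta_{m+2,n-1}^{-1}\bigr)\theta_{m+1,n}.$$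
   Context: Products of these banded semi-infinite matrices are computed entrywise as finite sums. *)

(* Defs.v *)
From mathcomp Require Import all_boot all_order all_algebra.
Set Implicit Arguments. Unset Strict Implicit. Unset Printing Implicit Defensive.
Import GRing.Theory.
Local Open Scope ring_scope.

(* Semi-infinite matrices over R, indexed by k >= 1 (entries at index 0 are
   unused and set to 0): functions nat -> nat -> R. *)
Definition simx (R : Type) := nat -> nat -> R.

(* Product of semi-infinite matrices whose left factor has upper bandwidth
   at most w (A i k = 0 for k > i + w): the full sum \sum_{k>=1} A i k B k j
   reduces to the finite sum over 1 <= k <= i + w. *)
Definition bmul (R : pzRingType) (w : nat) (A B : simx R) : simx R :=
  fun i j => \sum_(1 <= k < (i + w).+1) A i k * B k j.

Section Defs.
Variables (R : unitRingType) (theta : int -> nat -> R).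

Definition thinv (m : int) (n : nat) : R :=
  if n == 0%N then 0 else (theta m n)^-1.

Definition acoef (m : int) (n : nat) : R := theta (m + 1) n * (theta m n)^-1.
Definition bcoef (m : int) (n : nat) : R := theta (m - 1) n.+1 * (theta m n)^-1.

Definition Lmat (m : int) : simx R := fun i j =>
  if (i == 0%N) || (j == 0%N) then 0
  else if j == i.+1 then 1
  else if j == i then acoef (m - 1) i + bcoef m i
  else if i == j.+1 then acoef (m - 1) i * bcoef m j
  else 0.

Definition Mmat (m : int) : simx R := fun i j =>
  if (i == 0%N) || (j == 0%N) then 0
  else if j == i then 1
  else if i == j.+1 then bcoef m j
  else 0.
End Defs.

(* Main.v *)
Require Import Defs.
From mathcomp Require Import all_boot all_order all_algebra.
From mathcomp Require Import ring.
Import GRing.Theory.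
Local Open Scope ring_scope.

Lemma sum2 (R : pzRingType) (N p : nat) (F : nat -> R) :
  (p.+1 < N)%N -> (forall k, (k < N)%N -> k != p -> k != p.+1 -> F k = 0) ->
  \sum_(0 <= k < N) F k = F p + F p.+1.
Proof.
elim: N => [//|N IH] hp hF.
rewrite big_nat_recr //=.
case: (ltnP p.+1 N) => h.
  rewrite IH //; last by move=> k hk; apply: hF; apply: ltnW.
  rewrite [F N]hF ?addr0 //.
  - by rewrite neq_ltn (ltnW h) orbT.
  - by rewrite neq_ltn h orbT.
have eN : N = p.+1 by apply/eqP; rewrite eqn_leq h -ltnS hp.
rewrite eN in hF *.
rewrite big_nat_recr //= big1_seq ?add0r // => k; rewrite mem_iota add0n subn0 /= => hk.
apply: hF; first by apply: (ltn_trans hk); rewrite ltnS ltnW.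
  by rewrite neq_ltn hk.
by rewrite neq_ltn (ltn_trans hk).
Qed.

Lemma bmul_shift (R : pzRingType) (A B : simx R) i j :
  A i 0%N = 0 -> bmul 1 A B i j = \sum_(0 <= k < (i + 1).+1) A i k * B k j.
Proof. by move=> h; rewrite /bmul [RHS]big_ltn // h mul0r add0r. Qed.

Theorem proposition4p3 (F : fieldType) (R : unitAlgType F)
  (charF0 : [pchar F] =i pred0)
  (divR : forall x : R, x != 0 -> x \is a GRing.unit)
  (theta : int -> nat -> R)
  (theta_unit : forall (m : int) (n : nat), (0 < n)%N -> theta m n \is a GRing.unit)
  (Hlax : forall (m : int) (i j : nat), (0 < i)%N -> (0 < j)%N ->
     bmul 1 (Lmat theta (m - 1)) (Mmat theta m) i j
     = bmul 1 (Mmat theta m) (Lmat theta m) i j) :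
  forall (m : int) (n : nat), (0 < n)%N ->
    theta (m + 2) n
    = theta m n.+1
      + theta (m + 1) n * ((theta m n)^-1 - thinv theta (m + 2) n.-1)
        * theta (m + 1) n.
Proof.
move=> m [//|n] _.
have H := Hlax (m + 2) n.+1 n.+1 isT isT.
rewrite !bmul_shift in H; last 2 first.
- by rewrite /Mmat orbT.
- by rewrite /Lmat orbT.
rewrite (@sum2 _ _ n.+1) in H; last 2 first.
- by rewrite addn1.
- move=> k _ h1 h2; rewrite /Mmat (eq_sym n.+1 k) (negbTE h1) (negbTE h2).
  by rewrite if_same mulr0.
rewrite (@sum2 _ _ n) in H; last 2 first.
- by rewrite addn1 ltnW.
- move=> k _ h1 h2; rewrite {1}/Mmat (negbTE h2) eqSS (eq_sym n k) (negbTE h1).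
  by rewrite if_same mul0r.
move: H; rewrite /Lmat /Mmat /= !eqxx /= (ltn_eqF (ltnSn n.+1)) (ltn_eqF (ltnSn n)) /=.
rewrite /acoef /bcoef /thinv !mulr1 !mul1r.
have e1 : m + 2 - 1 - 1 = m by ring.
have e2 : m + 2 - 1 = m + 1 by ring.
have e3 : m + 1 - 1 = m by ring.
have e4 : m + 1 + 1 = m + 2 by ring.
rewrite e1 e2 ?e3 ?e4.
set A := theta (m + 1) n.+1.
set B := theta m n.+1.
set C := theta m n.+2.
set D := theta (m + 2) n.+1.
set E := theta (m + 1) n.+2.
set t := (if n == 0%N then 0 else (theta (m + 2) n)^-1).
have -> : (if n == 0%N then 0 else A * (theta (m + 2) n)^-1) = A * t.
  by rewrite /t; case: (n == 0%N); rewrite ?mulr0.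
rewrite orbF.
have uA : A \is a GRing.unit by apply: theta_unit.
have -> : A * t * (if n == 0%N then 0 else 1) = A * t.
  by rewrite /t; case: (n == 0%N); rewrite ?mulr0 ?mulr1.
move=> H.
have H3 : D / A = A / B + C / A - A * t.
  apply/eqP; rewrite eq_sym subr_eq; apply/eqP.
  apply: (addIr (E / D)); rewrite H addrA [A * t + _]addrC.
  by [].
rewrite -[D](divrK uA) H3 mulrBl mulrDl divrK // mulrBr mulrBl.
by rewrite [A / B * A + C]addrC addrA.
Qed.
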